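(* Let $X$ and $Y$ be Banach spaces and let $A: D(A)\subseteq X\to Y$ be a closed, (possibly nonlinear) injective map. Let $f\in\mathcal R(A)$ and let $u\in D(A)$ be the (unique) solution of $A(u)=f$. Let $\phi: D(\phi)\to[0,\infty)$ with $D(\phi)\subseteq D(A)$, $\phi(v)>0$ for $v\neq 0$, such that for every constant $c>0$ the set $\{v:\phi(v)\le c\}$ is compact in $X$, and such that $v_n\to v$ in $X$ implies $\phi(v)\le\liminf_{n\to\infty}\phi(v_n)$. Fix a constant $c>0$ with $\phi(u)\le c$. For $\delta>0$ and $f_\delta\in Y$ with $\|f_\delta-f\|\le\delta$, put $$S_\delta:=\{v:\ \|A(v)-f_\delta\|\le\delta,\ \phi(v)\le c\},\qquad F_\delta(v):=\|A(v)-f_\delta\|+\delta\,\phi(v),\qquad m(\delta):=\inf_{v\in S_\delta}F_\delta(v).$$ Let $(v_j)\subset S_\delta$ be a minimizing sequence with $F_\delta(v_j)\le 2m(\delta)$, converging in $X$ to some $v_\delta$, and define $R(\delta)f_\delta:=v_\delta$. Then $R(\delta)$ is a regularizer for the equation $A(u)=f$ in the following sense: there is a function $\eta(\delta)$ with $\eta(\delta)\to0$ as $\delta\to 0$ such that $$\sup_{v\in S_\delta}\|R(\delta)f_\delta-v\|\le\eta(\delta).$$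
   Context: $\mathcal R(A)$ denotes the range of $A$. A family of operators $R(\delta)$ is called a regularizer (in the new sense of the paper) if $\sup_{v\in S_\delta}\|R(\delta)f_\delta-v\|\le\eta(\delta)\to0$ as $\delta\to0$, where $S_\delta$ is the set of all $v$ in the a priori compact set $\{\phi\le c\}$ with $\|A(v)-f_\delta\|\le\delta$, and $f_\delta$ is any noisy datum with $\|f_\delta-f\|\le\delta$. *)

(* Defs.v *)
From HB Require Import structures.
From mathcomp Require Import all_boot all_order all_algebra.
From mathcomp Require Import all_classical all_reals all_analysis.
Set Implicit Arguments. Unset Strict Implicit. Unset Printing Implicit Defensive.
Import Order.TTheory GRing.Theory Num.Theory.
Import numFieldNormedType.Exports.
Local Open Scope classical_set_scope.
Local Open Scope ring_scope.

(* A (possibly nonlinear) operator A with domain DA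
   is a total function A : X -> Y together with a set DA : set X. *)

Definition closed_operator (R : realType) (X Y : normedModType R)
  (DA : set X) (A : X -> Y) : Prop :=
  closed [set p : X * Y | DA p.1 /\ p.2 = A p.1].

Definition injective_on (X Y : Type) (DA : set X) (A : X -> Y) : Prop :=
  forall x y, DA x -> DA y -> A x = A y -> x = y.

Definition seq_lsc (R : realType) (X : normedModType R)
  (Dphi : set X) (phi : X -> R) : Prop :=
  forall (vn : nat -> X) (v : X), (forall n, Dphi (vn n)) -> Dphi v ->
    vn @ \oo --> v ->
    ((phi v)%:E <= limn_einf (fun n => (phi (vn n))%:E))%E.

Definition S_delta (R : realType) (X Y : normedModType R)
  (A : X -> Y) (Dphi : set X) (phi : X -> R) (c delta : R) (fd : Y) : set X :=
  [set v | Dphi v /\ `|A v - fd| <= delta /\ phi v <= c].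

Definition F_delta (R : realType) (X Y : normedModType R)
  (A : X -> Y) (phi : X -> R) (delta : R) (fd : Y) (v : X) : R :=
  `|A v - fd| + delta * phi v.

Definition m_delta (R : realType) (X Y : normedModType R)
  (A : X -> Y) (Dphi : set X) (phi : X -> R) (c delta : R) (fd : Y) : R :=
  inf (F_delta A phi delta fd @` S_delta A Dphi phi c delta fd).

(* Main.v *)
From HB Require Import structures.
From mathcomp Require Import all_boot all_order all_algebra.
From mathcomp Require Import all_classical all_reals all_analysis.
Require Import Defs.
Import Order.TTheory GRing.Theory Num.Theory.
Import numFieldNormedType.Exports.
Local Open Scope classical_set_scope.
Local Open Scope ring_scope.

Lemma ev_small (R: realType) (x:R) : 0 < x -> \forall n \near \oo, n.+1%:R^-1 < x.
Proof. move=> x0; exact: (near_infty_natSinv_lt (PosNum x0)). Qed.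

Lemma graph_pt (R : realType) (X Y : normedModType R)
  (DA : set X) (A : X -> Y) (p : X) (f : Y) :
  closed_operator DA A ->
  (forall P Q, nbhs p P -> nbhs f Q -> exists x, DA x /\ P x /\ Q (A x)) ->
  DA p /\ A p = f.
Proof.
move=> cl H.
have : closure [set p : X * Y | DA p.1 /\ p.2 = A p.1] (p, f).
  move=> B /= [[P Q]] /= [nP nQ] PQB.
  have [x [Dx [Px Qx]]] := H P Q nP nQ.
  exists (x, A x); split => //; exact: PQB.
by move/cl => /= [? ->].
Qed.

Lemma core (R : realType) (X Y : normedModType R)
  (DA : set X) (A : X -> Y) (Dphi : set X) (phi : X -> R) (f : Y) (u : X) (c : R) :
  closed_operator DA A -> injective_on DA A -> DA u -> A u = f ->
  Dphi `<=` DA -> compact [set v | Dphi v /\ phi v <= c] ->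
  forall eps, 0 < eps -> exists d0, 0 < d0 /\ forall d w v, 0 < d -> d < d0 ->
    Dphi v -> phi v <= c -> `|A v - f| <= 2 * d -> `|w - v| <= d -> `|w - u| <= eps.
Proof.
move=> cl inj Du Auf sub cpt eps eps0.
apply: contrapT => H.
have H' : forall n : nat, exists t : R * X * X, 0 < t.1.1 /\ t.1.1 < n.+1%:R^-1 /\
    Dphi t.2 /\ phi t.2 <= c /\ `|A t.2 - f| <= 2 * t.1.1 /\ `|t.1.2 - t.2| <= t.1.1
    /\ eps < `|t.1.2 - u|.
  move=> n; apply: contrapT => Hn; apply: H; exists n.+1%:R^-1; split.
    by rewrite invr_gt0 ltr0n.
  move=> d w v d0 dn Dv pv Av wv; rewrite leNgt; apply/negP => ltw; apply: Hn.
  by exists (d, w, v).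
have [g Hg] := choice H'.
pose vn n := (g n).2.
have Fp : ProperFilter (vn @ \oo) by exact: fmap_proper_filter.
have FK : (vn @ \oo) [set v | Dphi v /\ phi v <= c].
  by exists 0%N => // n _; have [_ [_ [? [? _]]]] := Hg n.
have [p [[Dp pp] clp]] := cpt _ Fp FK.
have small : forall x, 0 < x -> (vn @ \oo) (vn @` [set n | (g n).1.1 < x]).
  move=> x x0; rewrite /= /fmap /=; near=> n; exists n => //=.
  have [_ [h _]] := Hg n; apply: lt_trans h _; near: n; exact: ev_small.
have [_ Apf] : DA p /\ A p = f.
  apply: graph_pt => // P Q nP /nbhs_ballP [e e0 eQ].
  have [x [[n nn <-] Px]] := clp _ _ (small (e / 2) (divr_gt0 e0 (ltr0Sn _ 1))) nP.
  exists (vn n); split; first by apply: sub; have [_ [_ [?]]] := Hg n.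
  split => //; apply: eQ; rewrite -ball_normE /= -normrN opprB.
  have [_ [_ [_ [_ [h _]]]]] := Hg n; apply: le_lt_trans h _.
  by rewrite -ltr_pdivlMl //= mulrC.
have pu : p = u by apply: inj => //; [exact: sub | rewrite Apf].
subst p.
have e20 : 0 < eps / 2 by rewrite divr_gt0.
have [x [[n nn <-] bx]] := clp _ _ (small (eps / 2) e20) (nbhsx_ballx u _ e20).
move: bx; rewrite -ball_normE /= => bx.
have [_ [_ [_ [_ [_ [wv lt]]]]]] := Hg n.
move: lt; apply/negP; rewrite -leNgt.
apply: (le_trans (ler_distD ((g n).2) _ _)).
rewrite (splitr eps); apply: lerD.
  by apply: (le_trans wv); exact: ltW.
by rewrite -normrN opprB; exact: ltW.
Unshelve. all: by end_near.
Qed.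

Theorem mainTheorem1 (R : realType) (X Y : completeNormedModType R)
  (DA : set X) (A : X -> Y) (Dphi : set X) (phi : X -> R)
  (f : Y) (u : X) (c : R) :
  closed_operator DA A ->
  injective_on DA A ->
  DA u -> A u = f ->
  Dphi `<=` DA ->
  (forall v, Dphi v -> 0 <= phi v) ->
  (forall v, Dphi v -> v != 0 -> 0 < phi v) ->
  (forall c' : R, 0 < c' -> compact [set v | Dphi v /\ phi v <= c']) ->
  seq_lsc Dphi phi ->
  0 < c -> Dphi u -> phi u <= c ->
  exists eta : R -> R,
    eta delta @[delta --> 0^'+] --> 0 /\
    forall (delta : R) (fd : Y), 0 < delta -> `|fd - f| <= delta ->
    forall (vj : nat -> X) (vd : X),
      (forall j, S_delta A Dphi phi c delta fd (vj j)) ->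
      (forall j, F_delta A phi delta fd (vj j)
                   <= 2 * m_delta A Dphi phi c delta fd) ->
      (fun j => F_delta A phi delta fd (vj j)) @ \oo
        --> m_delta A Dphi phi c delta fd ->
      vj @ \oo --> vd ->
      forall v, S_delta A Dphi phi c delta fd v -> `|vd - v| <= eta delta.
Proof.
move=> cl inj Du Auf sub phi0 phipos cpt lsc c0 Dpu pu.
have cK := cpt c c0.
pose E (d : R) := [set r : R | exists w v, Dphi v /\ phi v <= c /\ `|A v - f| <= 2 * d
   /\ `|w - v| <= d /\ r = `|w - u|].
exists (fun d => 2 * sup (E d)).
have [M0 [_ HM]] := compact_bounded cK.
have HB : forall x, Dphi x -> phi x <= c -> `|x| <= M0 + 1.
  move=> x Dx px; apply: (HM (M0 + 1)); first by rewrite ltrDl.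
  by split.
have E0 : forall d, 0 <= d -> E d 0.
  move=> d d0; exists u, u; split => //; split => //; split.
    by rewrite Auf subrr normr0; apply: mulr_ge0.
  by split => //; rewrite subrr normr0.
have Eub : forall d, 0 <= d -> has_ubound (E d).
  move=> d d0; exists (d + (M0 + 1 + `|u|)) => r [w [v [Dv [pv [_ [wv ->]]]]]].
  apply: (le_trans (ler_distD v _ _)); apply: lerD => //.
  apply: (le_trans (ler_distD 0 _ _)); rewrite subr0 sub0r normrN; apply: lerD => //.
  exact: HB.
have sup0 : forall d, 0 <= d -> 0 <= sup (E d).
  by move=> d d0; apply: (ub_le_sup (Eub d d0)); exact: E0.
split.
  apply/cvgrPdist_le => eps eps0.
  have e20 : 0 < eps / 2 by rewrite divr_gt0.
  have [d0 [d00 Hd0]] := @core _ _ _ _ _ _ _ _ _ _ cl inj Du Auf sub cK _ e20.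
  near=> d.
  have dpos : 0 < d by near: d; exact: nbhs_right_gt.
  have dlt : d < d0 by near: d; exact: nbhs_right_lt.
  rewrite sub0r normrN ger0_norm; last by rewrite mulr_ge0 // sup0 // ltW.
  rewrite -ler_pdivlMl // mulrC.
  apply: ge_sup; first by exists 0; apply: E0; exact: ltW.
  move=> r [w [v [Dv [pv [Av [wv ->]]]]]].
  exact: (Hd0 d w v).
move=> d fd d0 fdf vj vd Svj _ _ cvj v [Dv [Av pv]].
have Ub := ub_le_sup (Eub d (ltW d0)).
have Avf : forall x, `|A x - fd| <= d -> `|A x - f| <= 2 * d.
  move=> x h; rewrite -(subrK fd (A x)) -addrA mulr2n mulrDl mul1r.
  by apply: (le_trans (ler_normD _ _)); apply: lerD.
have [N _ HN] : \forall n \near \oo, `|vd - vj n| <= d.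
  by move/cvgrPdist_le : cvj; apply.
have [Dj [Aj pj]] := Svj N.
apply: (le_trans (ler_distD u _ _)); rewrite mulr2n mulrDl mul1r; apply: lerD.
  apply: Ub; exists vd, (vj N); split => //; split => //; split; first exact: Avf.
  by split => //; apply: HN => /=.
apply: Ub; exists v, v; split => //; split => //; split; first exact: Avf.
by split; [rewrite subrr normr0 ltW | rewrite distrC].
Unshelve. all: by end_near.
Qed.
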